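(* Let $a\in(0,1/2)$ and $0<\lambda\le\frac{2}{1-2a}$. There exists $C=C(a,\lambda)>0$ such that for all even $N$ (with $\check{\mathcal S}^a_N\ne\emptyset$) $$\frac{\pi^{\lambda,a}_N(\partial\check{\mathcal S}^a_N)}{\pi^{\lambda,a}_N(\check{\mathcal S}^a_N)}\ge CN^{-3}.$$
   Context: $\langle s\rangle$ is the smallest even integer $\ge s$. For $N$ even, $\mathcal S^a_N$ is the set of $\eta=(\eta_x)_{x\in\{0,\dots,N\}}$ with values in $\mathbb Z_{\ge0}$, $\eta_0=\eta_N=\langle aN\rangle$, $|\eta_{x+1}-\eta_x|=1$; $H(\eta)=\#\{x:\eta_x=0\}$; $\pi^{\lambda,a}_N(\eta)=\lambda^{H(\eta)}/\sum_{\eta'\in\mathcal S^a_N}\lambda^{H(\eta')}$. $\check{\mathcal S}^a_N=\{\eta\in\mathcal S^a_N:\exists x,\ \eta_x=0\}$, and $\partial\check{\mathcal S}^a_N$ is the set of $\eta\in\mathcal S^a_N$ with exactly one contact, i.e. $H(\eta)=1$ (equivalently, the paths of $\check{\mathcal S}^a_N$ from which the corner-flip dynamics can jump outside $\check{\mathcal S}^a_N$). *)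

(* Defs.v *)
From mathcomp Require Import all_boot all_order all_algebra.
From mathcomp Require Import reals.
Set Implicit Arguments. Unset Strict Implicit. Unset Printing Implicit Defensive.
Import Order.TTheory GRing.Theory Num.Theory.
Local Open Scope ring_scope.

Section PathDefs.
Variable R : realType.

Definition evceil (s : R) : int :=
  let c := Num.ceil s in if odd `|c|%N then c + 1 else c.

(* boundary height <aN> as a natural number (nonnegative since a > 0) *)
Definition h0 (a : R) (N : nat) : nat := `|evceil (a * N%:R)|%N.

(* Candidate paths: functions {0..N} -> nat. Values are stored in
   'I_(h0 a N + N + 1); every path of S^a_N takes values <= <aN> + N,
   so this codomain bound loses nothing. *)
Definition path (a : R) (N : nat) := {ffun 'I_N.+1 -> 'I_(h0 a N + N).+1}.

Definition ht (a : R) (N : nat) (eta : path a N) (x : 'I_N.+1) : nat :=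
  nat_of_ord (eta x).

Definition S (a : R) (N : nat) : {set path a N} :=
  [set eta : path a N |
     [&& ht eta ord0 == h0 a N, ht eta ord_max == h0 a N &
       [forall x : 'I_N.+1, (x < N)%N ==>
          ((ht eta (inord x.+1) == (ht eta x).+1) ||
           (ht eta x == (ht eta (inord x.+1)).+1))]]].

Definition H (a : R) (N : nat) (eta : path a N) : nat :=
  #|[set x : 'I_N.+1 | ht eta x == 0%N]|.

Definition piN (lam a : R) (N : nat) (A : {set path a N}) : R :=
  (\sum_(eta in A :&: S a N) lam ^+ H eta) /
  (\sum_(eta in S a N) lam ^+ H eta).

Definition Scheck (a : R) (N : nat) : {set path a N} :=
  [set eta in S a N | [exists x, ht eta x == 0%N]].

(* boundary of check S^a_N : paths of S^a_N with exactly one contact *)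
Definition dScheck (a : R) (N : nat) : {set path a N} :=
  [set eta in S a N | H eta == 1%N].

End PathDefs.

(* Main.v *)
Require Import Defs.
From mathcomp Require Import all_boot all_order all_algebra.
From mathcomp Require Import reals.
From mathcomp Require Import zify ring lra.
Set Implicit Arguments. Unset Strict Implicit. Unset Printing Implicit Defensive.
Import Order.TTheory GRing.Theory Num.Theory.
Section Walks.
Variable m : nat.

Definition fn n (f : {ffun 'I_n.+1 -> 'I_m}) (i : nat) : nat := f (inord i).
Definition stepb (x y : nat) := (y == x.+1) || (x == y.+1).
Definition walkb n (f : {ffun 'I_n.+1 -> 'I_m}) :=
  all (fun i => stepb (fn f i) (fn f i.+1)) (iota 0 n).
Definition zer n (f : {ffun 'I_n.+1 -> 'I_m}) := count (fun i => fn f i == 0) (iota 0 n.+1).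
Definition Pb n h y c (f : {ffun 'I_n.+1 -> 'I_m}) :=
  [&& fn f 0 == h, fn f n == y, walkb f & zer f == c].
Definition cnt n h y c := \sum_(f : {ffun 'I_n.+1 -> 'I_m}) (Pb h y c f : nat).

Definition ext n (g : {ffun 'I_n.+1 -> 'I_m}) (t : 'I_m) : {ffun 'I_n.+2 -> 'I_m} :=
  [ffun x : 'I_n.+2 => if (x <= n)%N then g (inord x) else t].
Definition restr n (f : {ffun 'I_n.+2 -> 'I_m}) : {ffun 'I_n.+1 -> 'I_m} :=
  [ffun x : 'I_n.+1 => f (inord x)].

Lemma fn_ext n g t i : i <= n -> fn (@ext n g t) i = fn g i.
Proof.
move=> hi; rewrite /fn /ext ffunE inordK; last by lia.
by rewrite hi.
Qed.

Lemma fn_ext_last n g t : fn (@ext n g t) n.+1 = t.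
Proof. by rewrite /fn /ext ffunE inordK // ltnn. Qed.

Lemma ext_restr n (f : {ffun 'I_n.+2 -> 'I_m}) : ext (restr f) (f ord_max) = f.
Proof.
apply/ffunP => x; rewrite /ext /restr !ffunE.
case: ifP => hx.
  congr (f _); apply/val_inj; rewrite /= !inordK //; lia.
congr (f _); apply/val_inj => /=; have := ltn_ord x; lia.
Qed.

Lemma restr_ext n g t : restr (@ext n g t) = g /\ (ext g t) ord_max = t.
Proof.
split; last by rewrite /ext ffunE /= ltnn.
apply/ffunP => x; rewrite /ext /restr !ffunE inordK; last by have := ltn_ord x; lia.
have -> : (x <= n)%N by have := ltn_ord x; lia.
by rewrite inord_val.
Qed.

Lemma sum_ext n (F : {ffun 'I_n.+2 -> 'I_m} -> nat) :
  \sum_(f : {ffun 'I_n.+2 -> 'I_m}) F f =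
  \sum_(g : {ffun 'I_n.+1 -> 'I_m}) \sum_(t : 'I_m) F (ext g t).
Proof.
rewrite pair_big /=.
rewrite (reindex (fun p : {ffun 'I_n.+1 -> 'I_m} * 'I_m => ext p.1 p.2)) //.
exists (fun f => (restr f, f ord_max)) => [[g t] _ | f _] /=.
  by case: (restr_ext g t) => -> ->.
exact: ext_restr.
Qed.

Lemma walkb_ext n g t : walkb (@ext n g t) = walkb g && stepb (fn g n) t.
Proof.
rewrite /walkb (_ : iota 0 n.+1 = iota 0 n ++ [:: n]); last by rewrite -addn1 iotaD.
rewrite all_cat /= andbT.
rewrite fn_ext // fn_ext_last; congr (_ && _).
apply: eq_in_all => i; rewrite mem_iota => /andP[_ hi].
rewrite !fn_ext //; lia.
Qed.

Lemma zer_ext n g t : zer (@ext n g t) = zer g + (t == 0 :> nat).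
Proof.
rewrite /zer (_ : iota 0 n.+2 = iota 0 n.+1 ++ [:: n.+1]); last by rewrite -addn1 iotaD.
rewrite count_cat; congr (_ + _); last by rewrite /= fn_ext_last addn0.
apply: eq_in_count => i; rewrite mem_iota => /andP[_ hi].
rewrite !fn_ext //; lia.
Qed.

Lemma sum_pick (y : nat) (F : nat -> nat) :
  \sum_(t : 'I_m) ((t : nat) == y) * F t = (y < m) * F y.
Proof.
case: (ltnP y m) => hy.
  rewrite (bigD1 (Ordinal hy)) //= eqxx mul1n big1 ?addn0 ?mul1n // => t ht.
  case: eqP => // e; exfalso; move/eqP: ht; apply; exact/val_inj.
rewrite big1 // => t _; case: eqP => // e; have := ltn_ord t; lia.
Qed.

Lemma cnt_S n h y c : cnt n.+1 h y c = (y < m) *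
  \sum_(g : {ffun 'I_n.+1 -> 'I_m})
     ([&& fn g 0 == h, walkb g, stepb (fn g n) y & zer g + (y == 0) == c] : nat).
Proof.
rewrite /cnt sum_ext big_distrr /=; apply: eq_bigr => g _.
rewrite -(sum_pick y (fun t => [&& fn g 0 == h, walkb g, stepb (fn g n) t
                                 & zer g + (t == 0) == c] : nat)).
apply: eq_bigr => t _.
rewrite /Pb walkb_ext zer_ext fn_ext // fn_ext_last.
case: (fn g 0 == h); case: (t == y :> nat); case: (walkb g); case: stepb => /=; rewrite ?mul1n ?mul0n ?andbF //.
Qed.

End Walks.

Local Open Scope ring_scope.

Definition binz (n : nat) (k : int) : nat := if k < 0 then 0%N else 'C(n, `|k|%N).

Lemma binzS n k : binz n.+1 k = (binz n k + binz n (k - 1))%N.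
Proof.
rewrite /binz; case: (ltrP k 0) => hk.
  by rewrite ifT //; lia.
case: (ltrP (k - 1) 0) => hk1.
  have -> : k = 0 by lia.
  by rewrite /= !bin0.
have -> : `|k|%N = (`|k - 1|%N).+1 by lia.
by rewrite binS.
Qed.

Lemma binz_sym n k : binz n k = binz n (n%:Z - k).
Proof.
rewrite /binz; case: (ltrP k 0) => hk; case: (ltrP (n%:Z - k) 0) => hk2 //.
- by rewrite bin_small //; lia.
- by rewrite bin_small //; lia.
- have -> : `|n%:Z - k|%N = (n - `|k|)%N by lia.
  by rewrite bin_sub //; lia.
Qed.

Lemma binz0n k : binz 0 k = (k == 0).
Proof.
rewrite /binz; case: (ltrP k 0) => hk.
  by case: eqP => //; lia.
rewrite bin0n; case: eqP; case: eqP => //; lia.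
Qed.

Fixpoint T (h n y c : nat) {struct n} : nat :=
  match n with
  | 0 => ((y == h) && (c == (h == 0)%N)) : nat
  | n'.+1 => if y is y'.+1 then (T h n' y' c + T h n' y'.+2 c)%N
             else if c is c'.+1 then T h n' 1 c' else 0%N
  end.

Lemma T_big h n y c : (h + n < y)%N -> T h n y c = 0%N.
Proof.
elim: n y c => [|n IH] y c hy /=.
  case: eqP => //; lia.
case: y hy => [|y] hy; first lia.
rewrite !IH //; lia.
Qed.

Lemma T_many h n y c : (n.+1 < c)%N -> T h n y c = 0%N.
Proof.
elim: n y c => [|n IH] y c hc /=.
  case: eqP => // _; case: eqP => //; case: (h == 0%N) => /=; lia.
case: y => [|y]; last by rewrite !IH //; lia.
case: c hc => [|c] hc //; rewrite IH //; lia.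
Qed.

Lemma T0 h n y (d : int) : (0 < h)%N -> y%:Z + 2 * d = n%:Z + h%:Z ->
  (T h n y 0)%:Z = (binz n d)%:Z - (binz n (d - h%:Z))%:Z.
Proof.
move=> h0; elim: n y d => [|n IH] y d e.
  rewrite /= !binz0n.
  have -> : (h == 0%N) = false by lia.
  case: (eqVneq y h) => [ey|ney].
    have -> : d = 0 by lia.
    rewrite eqxx; have -> : (0 - h%:Z == 0) = false by apply/eqP; lia.
    done.
  have -> : (d == 0) = false by apply/eqP; lia.
  have -> : (d - h%:Z == 0) = false by apply/eqP; lia.
  done.
case: y e => [|y] e /=.
  rewrite (binz_sym n.+1 d); have -> : n.+1%:Z - d = d - h%:Z by lia.
  by rewrite subrr.
rewrite PoszD (IH y d); last by lia.
rewrite (IH y.+2 (d - 1)); last by lia.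
rewrite (binzS n d) (binzS n (d - h%:Z)) !PoszD.
have -> : d - 1 - h%:Z = d - h%:Z - 1 by lia.
lia.
Qed.

Lemma T1 h n y (d : int) : (0 < h)%N -> y%:Z + 2 * d = n.+1%:Z + h%:Z ->
  (T h n.+1 y 1)%:Z = (binz n (d - h%:Z))%:Z - (binz n (d - h%:Z - 1))%:Z.
Proof.
move=> h0; elim: n y d => [|n IH] y d e.
  rewrite !binz0n; have hz : (h == 0%N) = false by lia.
  case: y e => [|y] e /=.
    rewrite hz.
    case: (eqVneq h 1%N) => [eh|nh].
      have -> : (d - h%:Z == 0) = true by apply/eqP; lia.
      have -> : (d - h%:Z - 1 == 0) = false by apply/eqP; lia.
      done.
    rewrite /=.
    have -> : (d - h%:Z == 0) = false by apply/eqP; lia.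
    have -> : (d - h%:Z - 1 == 0) = false by apply/eqP; lia.
    done.
  rewrite hz /= !andbF.
  have -> : (d - h%:Z == 0) = false by apply/eqP; lia.
  have -> : (d - h%:Z - 1 == 0) = false by apply/eqP; lia.
  done.
case: y e => [|y] e.
  change (T h n.+2 0 1) with (T h n.+1 1 0).
  rewrite (T0 (d := d - 1)) //; last by lia.
  rewrite (binz_sym n.+1 (d - 1)); have -> : n.+1%:Z - (d - 1) = d - h%:Z by lia.
  by have -> : d - 1 - h%:Z = d - h%:Z - 1 by lia.
change (T h n.+2 y.+1 1) with (T h n.+1 y 1 + T h n.+1 y.+2 1)%N.
rewrite PoszD (IH y d); last by lia.
rewrite (IH y.+2 (d - 1)); last by lia.
rewrite (binzS n (d - h%:Z)) (binzS n (d - h%:Z - 1)) !PoszD.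
have -> : d - 1 - h%:Z = d - h%:Z - 1 by lia.
lia.
Qed.

Lemma binz_le n k : (binz n k <= binz n.+1 k)%N.
Proof. rewrite binzS; lia. Qed.

Lemma Tc h n y c (d : int) : (0 < h)%N -> (0 < c)%N -> y%:Z + 2 * d = n%:Z + h%:Z ->
  (T h n y c <= binz (n.+1 - c) (d - h%:Z - c%:Z + 1))%N.
Proof.
move=> h0; elim: n y d c => [|n IH] y d c c0 e.
  rewrite /=; have -> : (h == 0%N) = false by lia.
  rewrite /=; have -> : (c == 0%N) = false by lia.
  by rewrite andbF.
case: y e => [|y] e /=.
  case: c c0 => [|c] c0 //.
  case: c c0 => [|c] c0.
    have H := T0 (n := n) (y := 1) (d := d - 1) h0 ltac:(lia).
    rewrite (binz_sym n (d - 1)) in H.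
    have E1 : n%:Z - (d - 1) = d - h%:Z by lia.
    rewrite E1 in H.
    have -> : d - h%:Z - 1%:Z + 1 = d - h%:Z by lia.
    have := binz_le n (d - h%:Z); rewrite subSS subn0; lia.
  have := IH 1%N (d - 1) c.+1 isT; rewrite -/(T h n 1 c.+1) => H; have {H} := H ltac:(lia).
  rewrite subSS.
  by have -> : d - 1 - h%:Z - c.+1%:Z + 1 = d - h%:Z - c.+2%:Z + 1 by lia.
case: (ltnP n.+1 c) => hc.
  by rewrite !T_many.
have H1 := IH y d c c0 ltac:(lia).
have H2 := IH y.+2 (d - 1) c c0 ltac:(lia).
have -> : (n.+2 - c = (n.+1 - c).+1)%N by lia.
rewrite binzS.
have -> : d - h%:Z - c%:Z + 1 - 1 = d - 1 - h%:Z - c%:Z + 1 by lia.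
lia.
Qed.

Section CntT.
Local Open Scope nat_scope.
Lemma cnt_T m n h y c : h + n < m -> cnt m n h y c = T h n y c.
Proof.
elim: n y c => [|n IH] y c hm.
  rewrite /cnt (reindex (fun t : 'I_m => [ffun _ : 'I_1 => t])) /=; last first.
    exists (fun f => f ord0) => [t _|f _]; first by rewrite ffunE.
    by apply/ffunP => x; rewrite ffunE (ord1 x).
  rewrite (eq_bigr (fun t : 'I_m => ((t : nat) == y) *
                      ((y == h) && (((y == 0) : nat) + 0 == c)) : nat)); last first.
    move=> t _; rewrite /Pb /walkb /zer /fn /= ffunE.
    case: (eqVneq (t : nat) y) => [->|ne]; first by rewrite mul1n.
    by rewrite /= andbF.
  rewrite (@sum_pick m y (fun=> ((y == h) && ((y == 0) + 0 == c)) : nat)) /=.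
  case: (ltnP y m) => hy; last first.
    rewrite mul0n; case: eqP => //; lia.
  rewrite mul1n addn0; case: eqP => //= ->.
  by rewrite eq_sym.
rewrite cnt_S.
case: (ltnP y m) => hy; last by rewrite mul0n T_big //; lia.
rewrite mul1n /=.
case: y hy => [|y] hy.
  case: c => [|c].
    by rewrite big1 // => g _; rewrite eqxx addn1 /= !andbF.
  rewrite -IH; last lia.
  apply: eq_bigr => g _; rewrite /Pb /stepb addn1 eqSS /=.
  by case: (fn g 0 == h); case: (walkb g); case: (fn g n == 1).
rewrite -!IH; try lia.
rewrite /cnt -big_split /=; apply: eq_bigr => g _.
rewrite /Pb /stepb eqSS addn0.
case: (fn g 0 == h); case: (walkb g); case: (zer g == c) => //=; rewrite ?andbF //.
rewrite !andbT (eq_sym y).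
move: (fn g n) => v.
by case: (v =P y); case: (v =P y.+2) => //= ??; lia.
Qed.

End CntT.

Local Open Scope nat_scope.
Lemma card_count n (P : 'I_n.+1 -> bool) :
  #|[set x | P x]| = count (fun i => P (inord i)) (iota 0 n.+1).
Proof.
rewrite -val_enum_ord count_map cardsE cardE /enum_mem size_filter.
rewrite (@eq_filter _ _ predT) // filter_predT.
apply: eq_count => x /=; by rewrite inord_val.
Qed.

Lemma walk_link n m (f : {ffun 'I_n.+1 -> 'I_m}) :
  [forall x : 'I_n.+1, (x < n)%N ==>
     ((nat_of_ord (f (inord x.+1)) == (nat_of_ord (f x)).+1) ||
      (nat_of_ord (f x) == (nat_of_ord (f (inord x.+1))).+1))] = walkb f.
Proof.
apply/forallP/allP => [Hf i|Hf x].
  rewrite mem_iota add0n => /andP[_ hi].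
  have := Hf (inord i); rewrite inordK; last lia.
  by rewrite hi /= /stepb /fn.
apply/implyP => hx.
have := Hf x; rewrite mem_iota add0n hx => /(_ isT).
by rewrite /stepb /fn inord_val.
Qed.

Lemma linkS (R : realType) (a : R) N (eta : Defs.path a N) c :
  ((eta \in Defs.S a N) && (Defs.H eta == c)) = Pb (h0 a N) (h0 a N) c eta.
Proof.
rewrite inE /Pb /Defs.H /ht card_count walk_link.
have e0 : (inord 0 : 'I_N.+1) = ord0 by apply/val_inj; rewrite /= inordK.
have eN : (inord N : 'I_N.+1) = ord_max by apply/val_inj; rewrite /= inordK.
rewrite /fn e0 eN /zer /fn.
by rewrite -!andbA.
Qed.

Local Open Scope ring_scope.

Lemma sum_pickR (R : pzSemiRingType) k (x : nat) (F : nat -> R) :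
  \sum_(c < k) ((c : nat) == x)%:R * F c = (x < k)%:R * F x.
Proof.
case: (ltnP x k) => hx.
  rewrite (bigD1 (Ordinal hx)) //= eqxx mul1r big1 ?addr0 ?mul1r // => t ht.
  case: eqP => e; rewrite ?mul0r //; exfalso; move/eqP: ht; apply; exact/val_inj.
rewrite mul0r big1 // => t _; case: eqP => e; rewrite ?mul0r //; have := ltn_ord t; lia.
Qed.

Lemma cnt_link (R : realType) (a : R) N c :
  \sum_(eta : Defs.path a N) (((eta \in Defs.S a N) && (Defs.H eta == c)) : nat)
  = T (h0 a N) N (h0 a N) c.
Proof.
rewrite -(@cnt_T (h0 a N + N).+1) //.
by apply: eq_bigr => eta _; rewrite linkS.
Qed.

Lemma sumD (R : realType) (a lam : R) N :
  \sum_(eta in dScheck a N) lam ^+ Defs.H eta = lam * (T (h0 a N) N (h0 a N) 1)%:R.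
Proof.
rewrite big_mkcond /=.
rewrite (eq_bigr (fun eta => (((eta \in Defs.S a N) && (Defs.H eta == 1%N)) : nat)%:R * lam)); last first.
  move=> eta _; rewrite inE.
  case: (eta \in Defs.S a N) => /=; last by rewrite mul0r.
  by case: eqP => [->|]; rewrite ?mul1r ?mul0r ?expr1.
by rewrite -big_distrl -natr_sum cnt_link mulrC.
Qed.

Lemma H_lt (R : realType) (a : R) N (eta : Defs.path a N) : (Defs.H eta < N.+2)%N.
Proof. by rewrite /Defs.H ltnS; apply: leq_trans (max_card _) _; rewrite card_ord. Qed.

Lemma sumW (R : realType) (a lam : R) N :
  \sum_(eta in Scheck a N) lam ^+ Defs.H eta =
  \sum_(c < N.+2) ((0 < c)%N%:R * lam ^+ c * (T (h0 a N) N (h0 a N) c)%:R).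
Proof.
rewrite big_mkcond /=.
rewrite (eq_bigr (fun eta => \sum_(c < N.+2)
   (((eta \in Defs.S a N) && (Defs.H eta == c)) : nat)%:R * ((0 < c)%N%:R * lam ^+ c))); last first.
  move=> eta _.
  rewrite (eq_bigr (fun c : 'I_N.+2 => ((c : nat) == Defs.H eta)%:R *
       ((eta \in Defs.S a N)%:R * ((0 < c)%N%:R * lam ^+ c)))); last first.
    move=> c _; rewrite eq_sym; case: (eta \in Defs.S a N); case: (_ == _);
      by rewrite /= ?mul1r ?mul0r.
  rewrite (sum_pickR _ _ (fun c => (eta \in Defs.S a N)%:R * ((0 < c)%N%:R * lam ^+ c))).
  rewrite H_lt mul1r inE.
  have -> : [exists x, ht eta x == 0%N] = (0 < Defs.H eta)%N.
    rewrite /Defs.H card_gt0; apply/existsP/set0Pn => [[x hx]|[x hx]]; exists x;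
      by rewrite inE in hx *.
  by case: (eta \in Defs.S a N); case: (0 < _)%N; rewrite /= ?mul1r ?mul0r.
rewrite exchange_big /=; apply: eq_bigr => c _.
rewrite -big_distrl -natr_sum cnt_link; by rewrite /= mulrC.
Qed.

Lemma Lb N u j : (j <= u)%N -> (u <= N)%N ->
  ('C(N - j, u - j) * N ^ j <= 'C(N, u) * u ^ j)%N.
Proof.
elim: j => [|j IH] hj hu; first by rewrite !subn0 !expn0 !muln1.
have IH' := IH (ltnW hj) hu.
have E := mul_bin_diag (N - j) (u - j.+1).
have e1 : ((N - j).-1 = N - j.+1)%N by lia.
have e2 : ((u - j.+1).+1 = u - j)%N by lia.
rewrite e1 e2 in E.
move: E IH'.
set A := 'C(N - j.+1, u - j.+1); set B := 'C(N - j, u - j); set C := 'C(N, u).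
set P := (N ^ j)%N; set Q := (u ^ j)%N => E IH'.
rewrite !expnS.
rewrite -(leq_pmul2l (_ : (0 < N - j)%N)); last lia.
have -> : ((N - j) * (A * (N * P)) = ((u - j) * N) * (B * P))%N.
  rewrite mulnA E; ring.
apply: (@leq_trans ((u * (N - j)) * (C * Q))%N).
  apply: leq_mul => //; nia.
by apply/eq_leq; ring.
Qed.

Lemma termb (R : realType) (lam : R) N u j : 0 <= lam -> lam * u%:R <= N%:R ->
  (j <= u)%N -> (u <= N)%N ->
  lam ^+ j * ('C(N - j, u - j))%:R <= ('C(N, u))%:R.
Proof.
move=> l0 lu hj hu.
have LR : ('C(N - j, u - j))%:R * N%:R ^+ j <= ('C(N, u))%:R * u%:R ^+ j :> R.
  by rewrite -!natrX -!natrM ler_nat Lb.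
case: (eqVneq N 0%N) => [N0|Np].
  have u0 : u = 0%N by lia.
  have j0 : j = 0%N by lia.
  by rewrite j0 u0 expr0 mul1r !subn0.
have Npos : 0 < N%:R ^+ j :> R by apply: exprn_gt0; rewrite ltr0n lt0n.
rewrite -(ler_pM2r Npos) -mulrA.
apply: (le_trans (y := lam ^+ j * (('C(N, u))%:R * u%:R ^+ j))).
  by apply: ler_wpM2l => //; rewrite exprn_ge0.
rewrite mulrCA -exprMn.
apply: ler_wpM2l; first by rewrite ler0n.
by apply: lerXn2r => //; rewrite nnegrE ?mulr_ge0 ?ler0n.
Qed.

Lemma h0_facts (R : realType) (a : R) N : 0 < a -> (0 < N)%N ->
  (0 < h0 a N)%N /\ a * N%:R <= (h0 a N)%:R.
Proof.
move=> a0 Np.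
rewrite /h0 /evceil.
set s := a * N%:R.
have s0 : 0 < s by rewrite mulr_gt0 // ltr0n.
have hc : s <= (Num.ceil s)%:~R := ceil_ge s.
have cp : 0 < Num.ceil s by rewrite ceil_gt0.
set c := Num.ceil s in hc cp *.
set e := (if odd `|c|%N then c + 1 else c).
have ce : c <= e by rewrite /e; case: ifP => _; lia.
have ep : 0 < e by lia.
split; first lia.
rewrite natr_absz ger0_norm; last exact: ltW.
apply: (le_trans hc); by rewrite ler_int.
Qed.

Lemma Dident h k : (0 < h)%N -> (h <= k)%N ->
  (k.*2 * T h k.*2 h 1 = h.*2 * 'C(k.*2, k - h))%N.
Proof.
move=> h0 hk.
have e2 : k.*2 = (k.*2.-1).+1 by lia.
have := T1 (n := k.*2.-1) (y := h) (d := k%:Z) h0 ltac:(lia).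
rewrite -e2.
have Ed := mul_bin_down k.*2 (k - h).
rewrite /binz.
have -> : (k%:Z - h%:Z < 0) = false by lia.
have -> : absz (k%:Z - h%:Z)%R = (k - h)%N by lia.
case: (ltnP h k) => hlt.
  have -> : (k%:Z - h%:Z - 1 < 0) = false by lia.
  have -> : absz (k%:Z - h%:Z - 1)%R = ((k - h).-1)%N by lia.
  have Eg := mul_bin_diag k.*2 (k - h).-1.
  rewrite (_ : ((k - h).-1.+1 = k - h)%N) in Eg; last lia.
  move=> ET.
  nia.
have -> : (k%:Z - h%:Z - 1 < 0) = true by lia.
move=> ET.
have kh : k = h by lia.
rewrite kh subnn bin0 in Ed *.
rewrite kh in ET; rewrite subnn bin0 in ET.
lia.
Qed.

Lemma term_bound (R : realType) (a lam : R) h k (c : nat) :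
  0 < lam -> (0 < h)%N -> lam * (1 - 2 * a) <= 2 -> 2 * a * k%:R <= h%:R ->
  (0 < c)%N%:R * lam ^+ c * (T h k.*2 h c)%:R <= (h <= k)%N%:R * (lam * ('C(k.*2, k - h))%:R).
Proof.
move=> l0 hpos l12 hak.
case: c => [|j] /=.
  by rewrite mul0r mul0r mulr_ge0 ?ler0n // mulr_ge0 ?ler0n // ltW.
have Tb := Tc (n := k.*2) (y := h) (c := j.+1) (d := k%:Z) hpos isT ltac:(lia).
rewrite /binz in Tb.
case: ifP Tb => hneg Tb.
  have -> : T h k.*2 h j.+1 = 0%N by lia.
  by rewrite mulr0 mulr_ge0 ?ler0n // mulr_ge0 ?ler0n // ltW.
have hk : (h + j <= k)%N by lia.
have -> : (h <= k)%N by lia.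
rewrite (_ : absz (k%:Z - h%:Z - j.+1%:Z + 1)%R = ((k - h) - j)%N) in Tb; last lia.
rewrite (_ : (k.*2.+1 - j.+1 = k.*2 - j)%N) in Tb; last lia.
have Tb' : (T h k.*2 h j.+1)%:R <= ('C(k.*2 - j, k - h - j))%:R :> R by rewrite ler_nat.
apply: (le_trans (y := lam * (lam ^+ j * ('C(k.*2 - j, k - h - j))%:R))).
  rewrite mul1r exprS -mulrA; apply: ler_wpM2l; first exact: ltW.
  by apply: ler_wpM2l => //; rewrite exprn_ge0 // ltW.
rewrite (_ : (true : nat)%:R = 1 :> R) // mul1r; apply: ler_wpM2l; first exact: ltW.
apply: termb; [exact: ltW | | lia | lia].
rewrite natrB; last lia.
rewrite -mul2n natrM.
apply: (le_trans (y := lam * (k%:R - 2 * a * k%:R))).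
  apply: ler_wpM2l; first exact: ltW.
  by rewrite lerB.
rewrite (_ : lam * (k%:R - 2 * a * k%:R) = k%:R * (lam * (1 - 2 * a))); last by ring.
rewrite [2%:R * k%:R]mulrC; apply: ler_wpM2l => //; exact: ler0n.
Qed.

Lemma cubic (R : realType) (x : R) : 1 <= x -> (x + 2) / x ^+ 3 <= 4.
Proof.
move=> x1. have x0 : 0 < x ^+ 3 by apply: exprn_gt0; lra.
rewrite ler_pdivrMr //.
have xx : 1 <= x * x by nra.
rewrite !exprS expr0 mulr1.
nra.
Qed.

Theorem lemma4p5 (R : realType) (a lam : R) :
  0 < a -> a < 1 / 2 -> 0 < lam -> lam <= 2 / (1 - 2 * a) ->
  exists2 C : R, 0 < C &
    forall N : nat, ~~ odd N -> Scheck a N != set0 ->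
      piN lam (dScheck a N) / piN lam (Scheck a N) >= C * (N%:R ^+ 3)^-1.
Proof.
move=> a0 a12 l0 lb.
exists (a / 2); first by rewrite divr_gt0.
move=> N ev ne.
have subS : forall eta, eta \in Scheck a N -> eta \in Defs.S a N.
  by move=> eta; rewrite inE => /andP[].
have EW : Scheck a N :&: Defs.S a N = Scheck a N.
  by apply/setIidPl/subsetP => eta /subS.
have ED : dScheck a N :&: Defs.S a N = dScheck a N.
  by apply/setIidPl/subsetP => eta; rewrite inE => /andP[].
rewrite /piN EW ED.
set Z := \sum_(eta in Defs.S a N) lam ^+ Defs.H eta.
set W := \sum_(eta in Scheck a N) lam ^+ Defs.H eta.
set D := \sum_(eta in dScheck a N) lam ^+ Defs.H eta.
case/set0Pn: ne => eta0 He0.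
have Wpos : 0 < W.
  rewrite /W (bigD1 eta0) //=.
  have := exprn_gt0 (Defs.H eta0) l0.
  have : 0 <= \sum_(i in Scheck a N | i != eta0) lam ^+ Defs.H i.
    by apply: sumr_ge0 => i _; rewrite exprn_ge0 // ltW.
  lra.
have Zpos : 0 < Z.
  rewrite /Z (bigD1 eta0) //=; last exact: subS.
  have := exprn_gt0 (Defs.H eta0) l0.
  have : 0 <= \sum_(i in Defs.S a N | i != eta0) lam ^+ Defs.H i.
    by apply: sumr_ge0 => i _; rewrite exprn_ge0 // ltW.
  lra.
have D0 : 0 <= D by apply: sumr_ge0 => i _; rewrite exprn_ge0 // ltW.
have -> : D / Z / (W / Z) = D / W.
  by field; apply/andP; split; rewrite gt_eqF.
case: (eqVneq N 0%N) => [N0|Nn0].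
  by rewrite N0 expr0n /= invr0 mulr0 divr_ge0 // ltW.
have Np : (0 < N)%N by rewrite lt0n.
rewrite ler_pdivlMr //.
have [hpos haN] := h0_facts a0 Np.
set h := h0 a N in hpos haN.
set k := N./2.
have Nk : N = k.*2 by rewrite /k -[LHS](odd_double_half N) (negbTE ev) add0n.
have Nr : N%:R = 2 * k%:R :> R by rewrite Nk -mul2n natrM.
have l12 : lam * (1 - 2 * a) <= 2.
  by rewrite -ler_pdivlMr // subr_gt0; lra.
have hak : 2 * a * k%:R <= h%:R.
  by rewrite Nr in haN; rewrite -mulrA mulrCA.
have EDv : D = lam * (T h N h 1)%:R by rewrite /D sumD.
have EWv : W = \sum_(c < N.+2) ((0 < c)%N%:R * lam ^+ c * (T h N h c)%:R)
  by rewrite /W sumW.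
set C' := ('C(N, k - h))%:R : R.
have C0 : 0 <= C' by exact: ler0n.
have Wb : W <= N.+2%:R * ((h <= k)%N%:R * (lam * C')).
  rewrite EWv.
  apply: (le_trans (y := \sum_(c < N.+2) ((h <= k)%N%:R * (lam * C')))).
    apply: ler_sum => c _.
    have := @term_bound R a lam h k c l0 hpos l12 hak.
    by rewrite -Nk.
  by rewrite sumr_const card_ord (mulr_natl _ N.+2).
have hk : (h <= k)%N.
  case: (leqP h k) => // hk; exfalso.
  move: Wb; rewrite (ltn_geF hk).
  rewrite mul0r mulr0; lra.
rewrite hk (_ : (true : nat)%:R = 1 :> R) // mul1r in Wb.
have DI := Dident hpos hk; rewrite -Nk in DI.
have DIR : N%:R * (T h N h 1)%:R = 2 * h%:R * C' :> R.
  by rewrite -natrM DI -mul2n !natrM.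
set t := (T h N h 1)%:R : R in DIR EDv.
set x := N%:R : R in DIR Wb haN Nr *.
have x1 : 1 <= x by rewrite /x ler1n.
have tb : 2 * a * C' <= t.
  rewrite -(ler_pM2l (_ : 0 < x)); last lra.
  rewrite DIR; rewrite mulrA (mulrC x) -(mulrA 2 a x).
  apply: ler_wpM2r => //; lra.
have cb := cubic x1.
have ax3 : 0 <= a / 2 / x ^+ 3.
  by apply: divr_ge0; [lra | apply: exprn_ge0; lra].
rewrite EDv.
apply: (le_trans (y := a / 2 / x ^+ 3 * (N.+2%:R * (lam * C')))).
  exact: ler_wpM2l.
rewrite (_ : N.+2%:R = x + 2); last by rewrite /x -addn2 natrD.
rewrite mulrA.
apply: (le_trans (y := 2 * a * (lam * C'))).
  apply: ler_wpM2r; first by apply: mulr_ge0 => //; lra.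
  rewrite (_ : a / 2 / x ^+ 3 * (x + 2) = a / 2 * ((x + 2) / x ^+ 3)); last by rewrite -mulrA (mulrC _^-1).
  apply: (le_trans (y := a / 2 * 4)).
    by apply: ler_wpM2l => //; rewrite divr_ge0 // ltW.
  by rewrite (_ : a / 2 * 4 = 2 * a) //; field.
rewrite mulrCA; apply: ler_wpM2l; lra.
Qed.
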